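(* Let $d:\mathbb{R}\to\mathbb{R}$ be a derivation and $\alpha>0$. Then the function $F_{d,\alpha}:\mathbb{R}_+\to\mathbb{R}_+$ defined by \[ F_{d,\alpha}(x)=x^\alpha\exp\Big(\frac{d(x)}{x}\Big)\qquad(x\in\mathbb{R}_+) \] is multiplicative and $(p,\alpha^{-1}p)$-Jensen convex for every positive rational $p$, i.e. \[ F_{d,\alpha}\big(H_p(x,y)\big)\le H_{p/\alpha}\big(F_{d,\alpha}(x),F_{d,\alpha}(y)\big)\qquad(x,y>0,\ p\in\mathbb{Q},\ p>0). \] Hence, if $d$ is a nonzero derivation, then $F_{d,\alpha}$ is a discontinuous function on $\mathbb{R}_+$ which is $(p,\alpha^{-1}p)$-Jensen convex for all positive rationals $p$.
   Context: $\mathbb{R}_+=]0,\infty[$. For $p\in\mathbb{R}$, $H_p(x,y)=\left(\frac{x^p+y^p}{2}\right)^{1/p}$ if $p\neq0$ and $H_0(x,y)=\sqrt{xy}$ ($x,y>0$). A derivation is a function $d:\mathbb{R}\to\mathbb{R}$ that is additive ($d(x+y)=d(x)+d(y)$) and satisfies $d(xy)=xd(y)+yd(x)$ for all $x,y\in\mathbb{R}$. A function $m:\mathbb{R}_+\to\mathbb{R}_+$ is multiplicative if $m(xy)=m(x)m(y)$ for all $x,y>0$. *)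

(* Defs.v *)
From Stdlib Require Import Reals QArith Qreals.
Open Scope R_scope.

Definition H (p x y : R) : R :=
  if Req_EM_T p 0 then sqrt (x * y)
  else Rpower ((Rpower x p + Rpower y p) / 2) (/ p).

Definition derivation (d : R -> R) : Prop :=
  (forall x y, d (x + y) = d x + d y) /\
  (forall x y, d (x * y) = x * d y + y * d x).

Definition F (d : R -> R) (alpha x : R) : R :=
  Rpower x alpha * exp (d x / x).

(* Main.v *)
Require Import Defs.
From Stdlib Require Import Reals QArith Qreals ZArith Lra Lia.
Open Scope R_scope.

Definition L (d : R -> R) x := d x / x.

Lemma d0 d : derivation d -> d 0 = 0.
Proof. intros [Ha _]. specialize (Ha 0 0). rewrite Rplus_0_l in Ha. lra. Qed.

Lemma d1 d : derivation d -> d 1 = 0.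
Proof. intros [_ Hm]. specialize (Hm 1 1). rewrite Rmult_1_l in Hm. lra. Qed.

Lemma dopp d x : derivation d -> d (- x) = - d x.
Proof. intros Hd. pose proof (d0 d Hd) as H0. destruct Hd as [Ha _].
  specialize (Ha x (-x)). rewrite Rplus_opp_r, H0 in Ha. lra. Qed.

Lemma dINR d n : derivation d -> d (INR n) = 0.
Proof. intros Hd. induction n. simpl. apply d0; auto.
  rewrite S_INR. pose proof (d1 d Hd) as H1. destruct Hd as [Ha _]. rewrite Ha, IHn, H1. lra. Qed.

Lemma dIZR d z : derivation d -> d (IZR z) = 0.
Proof. intros Hd. destruct z.
  - apply d0; auto.
  - rewrite <- (positive_nat_Z p), <- INR_IZR_INZ. apply dINR; auto.
  - rewrite IZR_NEG, dopp by auto. rewrite <- (positive_nat_Z p), <- INR_IZR_INZ, dINR by auto. lra.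
Qed.

Lemma ddiv0 d a b : derivation d -> b <> 0 -> d a = 0 -> d b = 0 -> d (a / b) = 0.
Proof. intros Hd Hb Ha Hb0.
  assert (Hi : d (/ b) = 0).
  { pose proof (d1 d Hd) as H1. destruct Hd as [_ Hm]. specialize (Hm b (/ b)).
    rewrite Rinv_r in Hm by auto. rewrite H1, Hb0 in Hm.
    assert (b * d (/b) = 0) by lra. apply Rmult_integral in H. destruct H; [contradiction|auto]. }
  destruct Hd as [_ Hm]. unfold Rdiv. rewrite Hm, Hi, Ha. ring. Qed.

Lemma L_mult d x y : derivation d -> x <> 0 -> y <> 0 -> L d (x * y) = L d x + L d y.
Proof. intros [_ Hm] Hx Hy. unfold L. rewrite Hm. field. auto. Qed.

Lemma L_pow d x n : derivation d -> 0 < x -> L d (x ^ n) = INR n * L d x.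
Proof. intros Hd Hx. induction n.
  - simpl. unfold L. rewrite (d1 d Hd). unfold Rdiv; ring.
  - simpl pow. assert (x <> 0) by lra. rewrite L_mult, IHn, S_INR; auto using pow_nonzero. ring.
Qed.

Lemma Rpower_pos x y : 0 < Rpower x y.
Proof. unfold Rpower. apply exp_pos. Qed.

Lemma L_root d x n : derivation d -> 0 < x -> (0 < n)%nat ->
  L d (Rpower x (/ INR n)) = L d x / INR n.
Proof. intros Hd Hx Hn.
  assert (Hn' : 0 < INR n) by (apply lt_0_INR; auto).
  set (y := Rpower x (/ INR n)).
  assert (Hy : x = y ^ n).
  { unfold y. rewrite <- Rpower_pow by apply Rpower_pos. rewrite Rpower_mult, Rinv_l, Rpower_1; auto. lra. }
  rewrite Hy at 1. rewrite L_pow by (auto; apply Rpower_pos). field. lra. Qed.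

Lemma L_Q d x q : derivation d -> 0 < x -> (0 < q)%Q ->
  L d (Rpower x (Q2R q)) = Q2R q * L d x.
Proof. intros Hd Hx Hq.
  destruct q as [m n]. unfold Qlt in Hq. simpl in Hq.
  assert (Hm : (0 < m)%Z) by lia.
  unfold Q2R. simpl Qnum. simpl Qden.
  replace m with (Z.of_nat (Z.to_nat m)) by lia.
  rewrite <- (positive_nat_Z n), <- !INR_IZR_INZ.
  assert (Hn : (0 < Pos.to_nat n)%nat) by lia.
  assert (Hn' : 0 < INR (Pos.to_nat n)) by (apply lt_0_INR; auto).
  rewrite Rmult_comm, <- Rpower_mult, Rpower_pow by apply Rpower_pos.
  rewrite L_pow, L_root by (auto; apply Rpower_pos). field. lra. Qed.
Lemma exp_jensen a b u v : 0 < a -> 0 < b ->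
  (a + b) * exp ((a * u + b * v) / (a + b)) <= a * exp u + b * exp v.
Proof. intros Ha Hb. set (w := (a * u + b * v) / (a + b)).
  assert (Hw : a * (u - w) + b * (v - w) = 0) by (unfold w; field; lra).
  assert (Eu : exp u = exp w * exp (u - w)) by (rewrite <- exp_plus; f_equal; ring).
  assert (Ev : exp v = exp w * exp (v - w)) by (rewrite <- exp_plus; f_equal; ring).
  pose proof (exp_ineq1_le (u - w)). pose proof (exp_ineq1_le (v - w)).
  pose proof (exp_pos w).
  assert (a * exp u >= a * exp w * (1 + (u - w))).
  { rewrite Eu. rewrite Rmult_assoc. apply Rle_ge, Rmult_le_compat_l; [lra|].
    apply Rmult_le_compat_l; lra. }
  assert (b * exp v >= b * exp w * (1 + (v - w))).
  { rewrite Ev. rewrite Rmult_assoc. apply Rle_ge, Rmult_le_compat_l; [lra|].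
    apply Rmult_le_compat_l; lra. }
  nra. Qed.

Lemma Rpower_exp t c : Rpower (exp t) c = exp (c * t).
Proof. unfold Rpower. rewrite ln_exp. auto. Qed.

Lemma F_pow d alpha c x : 0 < x -> 0 < alpha ->
  Rpower (F d alpha x) c = Rpower x (alpha * c) * exp (c * L d x).
Proof. intros Hx Ha. unfold F. rewrite <- Rpower_mult_distr by (apply Rpower_pos || apply exp_pos).
  rewrite Rpower_mult, Rpower_exp. reflexivity. Qed.

Lemma Rpower_le_inv A B c : 0 < A -> 0 < B -> 0 < c -> Rpower A c <= Rpower B c -> A <= B.
Proof. intros HA HB Hc H.
  rewrite <- (Rpower_1 A), <- (Rpower_1 B) by auto.
  replace 1 with (c * / c) by (field; lra).
  rewrite <- !Rpower_mult. apply Rle_Rpower_l. left; apply Rinv_0_lt_compat; auto.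
  split; auto. apply Rpower_pos. Qed.

Theorem theorem3 (d : R -> R) (alpha : R) :
  derivation d -> 0 < alpha ->
  (* F maps R_+ into R_+ *)
  (forall x, 0 < x -> 0 < F d alpha x) /\
  (* multiplicative *)
  (forall x y, 0 < x -> 0 < y -> F d alpha (x * y) = F d alpha x * F d alpha y) /\
  (* (p, p/alpha)-Jensen convex for every positive rational p *)
  (forall (q : Q) x y, (0 < q)%Q -> 0 < x -> 0 < y ->
     F d alpha (H (Q2R q) x y) <=
     H (Q2R q / alpha) (F d alpha x) (F d alpha y)) /\
  (* if d is nonzero, F is discontinuous on R_+ *)
  ((exists z, d z <> 0) -> ~ (forall x, 0 < x -> continuity_pt (F d alpha) x)).
Proof.
  intros Hd Ha.
  assert (Fpos : forall x, 0 < F d alpha x).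
  { intros x. unfold F. apply Rmult_lt_0_compat. apply Rpower_pos. apply exp_pos. }
  split; [intros; apply Fpos|].
  split.
  { intros x y Hx Hy. unfold F. rewrite <- Rpower_mult_distr by auto.
    fold (L d (x * y)) (L d x) (L d y). rewrite L_mult by (auto; lra).
    rewrite exp_plus. ring. }
  split.
  { intros q x y Hq Hx Hy.
    pose proof (Qlt_Rlt _ _ Hq) as Hp. rewrite RMicromega.Q2R_0 in Hp.
    set (p := Q2R q) in *.
    unfold H. destruct (Req_EM_T p 0) as [E|_]; [lra|].
    destruct (Req_EM_T (p / alpha) 0) as [E|_].
    { exfalso. unfold Rdiv in E. apply Rmult_integral in E.
      destruct E as [E|E]; [lra|]. pose proof (Rinv_0_lt_compat alpha Ha). lra. }
    set (a := Rpower x p). set (b := Rpower y p).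
    assert (Hapos : 0 < a) by apply Rpower_pos.
    assert (Hbpos : 0 < b) by apply Rpower_pos.
    set (S := (a + b) / 2).
    assert (HS : 0 < S) by (unfold S; lra).
    set (M := Rpower S (/ p)).
    assert (HM : 0 < M) by apply Rpower_pos.
    rewrite !F_pow by auto.
    replace (alpha * (p / alpha)) with p by (field; lra).
    fold a b.
    assert (LS : L d S = (a * (p * L d x) + b * (p * L d y)) / (a + b)).
    { unfold S, L. pose proof (ddiv0 d 1 2 Hd ltac:(lra) (d1 d Hd)
        ltac:(replace 2 with (IZR 2) by reflexivity; apply dIZR; auto)) as H2.
      replace (d ((a + b) / 2)) with ((d a + d b) / 2).
      2:{ unfold Rdiv. destruct Hd as [Had Hm]. rewrite Hm, Had.
          replace (/ 2) with (1 / 2) by field. rewrite H2. field. }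
      assert (Ea : d a = a * (p * L d x)).
      { unfold a, p. rewrite <- L_Q by auto. fold p. fold a. unfold L. field. lra. }
      assert (Eb : d b = b * (p * L d y)).
      { unfold b, p. rewrite <- L_Q by auto. fold p. fold b. unfold L. field. lra. }
      rewrite Ea, Eb. unfold L. field. repeat split; lra. }
    assert (LM : L d M = (a * L d x + b * L d y) / (a + b)).
    { assert (E : Rpower M p = S).
      { unfold M. rewrite Rpower_mult, Rinv_l, Rpower_1; auto; lra. }
      assert (E2 : L d (Rpower M p) = p * L d M) by (unfold p; apply L_Q; auto).
      rewrite E, LS in E2.
      apply (Rmult_eq_reg_l p); [|lra]. rewrite <- E2. field. lra. }
    apply (Rpower_le_inv _ _ (p / alpha)).
    - apply Fpos.
    - apply Rpower_pos.
    - apply Rdiv_lt_0_compat; auto.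
    - rewrite F_pow by auto.
      rewrite Rpower_mult. replace (/ (p / alpha) * (p / alpha)) with 1 by (field; lra).
      rewrite Rpower_1 by (pose proof (exp_pos (p / alpha * L d x)); pose proof (exp_pos (p / alpha * L d y)); nra).
      unfold M. rewrite Rpower_mult. replace (/ p * (alpha * (p / alpha))) with 1 by (field; lra).
      rewrite Rpower_1 by auto. fold M. rewrite LM. unfold S.
      pose proof (exp_jensen a b (p / alpha * L d x) (p / alpha * L d y) Hapos Hbpos) as J.
      replace ((a * (p / alpha * L d x) + b * (p / alpha * L d y)) / (a + b))
        with (p / alpha * ((a * L d x + b * L d y) / (a + b))) in J by (field; split; lra).
      lra. }
  intros [z Hz] Hc.
  assert (Hzero : forall x, 0 < x -> d x = 0).
  { intros x Hx.
    assert (Hcp : continuity_pt (fun y => Rpower y alpha) x).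
    { apply derivable_continuous_pt. exists (alpha * Rpower x (alpha - 1)).
      apply derivable_pt_lim_power; auto. }
    assert (HG : continuity_pt (F d alpha / fun y => Rpower y alpha)%F x).
    { apply continuity_pt_div; auto. apply Rgt_not_eq, Rpower_pos. }
    assert (Gr : forall y, (F d alpha / (fun y => Rpower y alpha))%F y = exp (L d y)).
    { intros y. unfold div_fct, F, L. field. apply Rgt_not_eq, Rpower_pos. }
    assert (G1 : exp (L d x) = 1).
    { destruct (Req_dec (exp (L d x)) 1) as [E|E]; auto. exfalso.
      unfold continuity_pt, continue_in, limit1_in, limit_in in HG. simpl in HG.
      unfold R_dist, D_x, no_cond in HG.
      destruct (HG (Rabs (exp (L d x) - 1))) as [alp [Halp Hcl]].
      { apply Rabs_pos_lt; lra. }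
      set (N := IZR (up (/ alp))).
      destruct (archimed (/alp)) as [A1 A2]. pose proof (Rinv_0_lt_compat alp Halp).
      assert (HN : 0 < N) by (unfold N; lra).
      destruct (archimed (x * N)) as [B1 B2].
      set (r := IZR (up (x*N)) / N).
      assert (Er : r * N = IZR (up (x*N))) by (unfold r; field; lra).
      assert (rx : x < r) by nra.
      assert (aN : 1 < alp * N).
      { replace 1 with (alp * / alp) by (field; lra). apply Rmult_lt_compat_l; auto. }
      assert (rx2 : r - x < alp) by nra.
      assert (Hr : d r = 0).
      { apply ddiv0; auto; try lra; apply dIZR; auto. }
      assert (Hrd : Rabs (r - x) < alp) by (rewrite Rabs_right; lra).
      specialize (Hcl r (conj (conj I (Rlt_not_eq _ _ rx)) Hrd)).
      rewrite !Gr in Hcl. unfold L in Hcl at 1. rewrite Hr in Hcl.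
      replace (0 / r) with 0 in Hcl by (field; lra). rewrite exp_0, Rabs_minus_sym in Hcl. lra. }
    rewrite <- exp_0 in G1. apply exp_inv in G1. unfold L in G1.
    replace (d x) with (d x / x * x) by (field; lra). rewrite G1. ring. }
  apply Hz. destruct (total_order_T z 0) as [[Hl|He]|Hg].
  - replace z with (- (- z)) by ring. rewrite dopp, Hzero by (auto; lra). ring.
  - subst. apply d0; auto.
  - apply Hzero; auto.
Qed.
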